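(* In every symmetric instance with $k$ signals ($2\le k\le n$), for every direct and persuasive scheme $\varphi$ that recommends only actions in $[k]$, there exist $s\in[-\infty,0]$ and an $s$-Pareto point collection $\mathcal P$ with $u_{\mathcal S}(\mathcal P)\ge u_{\mathcal S}(\varphi)$.
   Context: Model: a receiver chooses one of the actions $[n]$; each action $i$ has a type $\theta_i$; the state $\boldsymbol\theta=(\theta_1,\dots,\theta_n)$ is drawn from a commonly known distribution $q$ over a finite set of type vectors. Each type $t$ has receiver value $\rho(t)$ and sender value $\xi(t)$. A signaling scheme with $k$ signals maps each state to a distribution over $k$ signals; the receiver picks an action maximizing her conditional expected utility given the signal, ties broken in favor of the sender; $u_{\mathcal S},u_{\mathcal R}$ denote expected utilities. Direct: each signal recommends an action; persuasive: for each signal sent with positive probability recommending $i$, $\mathbb E[\rho(\theta_i)\mid\sigma]\ge\mathbb E[\rho(\theta_j)\mid\sigma]$ for all $j$. $\rho_E=\max_{i}\sum_{\boldsymbol\theta}q_{\boldsymbol\theta}\rho(\theta_i)$. Symmetric instance: $q_{\boldsymbol\theta}=q_{\boldsymbol\theta'}$ whenever $\boldsymbol\theta'$ is a permutation of $\boldsymbol\theta$; types in a state are pairwise distinct. Identify each type $c$ with the point $(\rho(c),\xi(c))$. For a $k$-set $C$ of types, $q_C=\Pr[\{\theta_1,\dots,\theta_k\}=C]$. For $s\in(-\infty,0]$, a point $p\in\mathrm{conv}(C)$ corresponds to slope $s$ if it maximizes $y-sx$ over $(x,y)\in\mathrm{conv}(C)$; it corresponds to slope $-\infty$ if it maximizes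 the first coordinate over $\mathrm{conv}(C)$. A point collection $\mathcal P$ assigns to each $C$ with $q_C>0$ a point $p(C)=(p_{\mathcal R}(C),p_{\mathcal S}(C))\in\mathrm{conv}(C)$; $u_{\mathcal S}(\mathcal P)=\sum_Cq_Cp_{\mathcal S}(C)$, $u_{\mathcal R}(\mathcal P)=\sum_Cq_Cp_{\mathcal R}(C)$. $\mathcal P$ is $s$-Pareto if every $p(C)$ corresponds to slope $s$ and $u_{\mathcal R}(\mathcal P)\ge\rho_E$. *)

(* Defs.v *)
From HB Require Import structures.
From mathcomp Require Import all_boot all_order all_algebra all_fingroup.
From mathcomp Require Import reals.
Set Implicit Arguments. Unset Strict Implicit. Unset Printing Implicit Defensive.
Import Order.TTheory GRing.Theory Num.Theory.
Local Open Scope ring_scope.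

(* A state: the vector of types (theta_1, ..., theta_n) of the n actions. *)
Definition state (n : nat) (T : finType) := {ffun 'I_n -> T}.

(* Maximum of a nonempty finite list of reals (0 on the empty list, never used
   since n >= 2). *)
Definition seqmax {R : realDomainType} (s : seq R) : R :=
  match s with [::] => 0 | x :: s' => foldr Num.max x s' end.

Section Model.
Variables (R : realType) (T : finType) (n k : nat).
Variables (rho xi : T -> R) (q : state n T -> R).

Definition is_prior : Prop := (forall th, 0 <= q th) /\ \sum_th q th = 1.

Definition symmetric_instance : Prop :=
  (forall (th : state n T) (pi : 'S_n), q [ffun i => th (pi i)] = q th) /\
  (forall th : state n T, 0 < q th -> injective th).

(* signaling scheme with k signals: phi th sg = Pr[signal sg | state th] *)
Definition is_scheme (phi : state n T -> 'I_k -> R) : Prop :=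
  (forall th sg, 0 <= phi th sg) /\ (forall th, \sum_sg phi th sg = 1).

Definition sig_prob (phi : state n T -> 'I_k -> R) (sg : 'I_k) : R :=
  \sum_th q th * phi th sg.

(* conditional expectation of f given signal sg (0 if Pr[sg] = 0) *)
Definition cond_exp (phi : state n T -> 'I_k -> R) (sg : 'I_k)
  (f : state n T -> R) : R :=
  (\sum_th q th * phi th sg * f th) / sig_prob phi sg.

Definition persuasive (phi : state n T -> 'I_k -> R) (rec : 'I_k -> 'I_n) : Prop :=
  forall sg, 0 < sig_prob phi sg ->
    forall j : 'I_n, cond_exp phi sg (fun th => rho (th j))
                     <= cond_exp phi sg (fun th => rho (th (rec sg))).

Definition receiver_opt (phi : state n T -> 'I_k -> R) (sg : 'I_k) (i : 'I_n) : bool :=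
  [forall j : 'I_n, cond_exp phi sg (fun th => rho (th j))
                    <= cond_exp phi sg (fun th => rho (th i))].

(* sender's conditional utility given sg, receiver breaking ties for sender *)
Definition sender_sig_value (phi : state n T -> 'I_k -> R) (sg : 'I_k) : R :=
  seqmax (map (fun i : 'I_n => cond_exp phi sg (fun th => xi (th i)))
              (filter (receiver_opt phi sg) (enum 'I_n))).

Definition uS_scheme (phi : state n T -> 'I_k -> R) : R :=
  \sum_sg sig_prob phi sg * sender_sig_value phi sg.

Definition firstk (th : state n T) : {set T} := th @: [set i : 'I_n | (i < k)%N].

Definition qC (C : {set T}) : R := \sum_th q th * (firstk th == C)%:R.

(* p in conv(C), identifying type c with the point (rho c, xi c) *)
Definition inconv (C : {set T}) (p : R * R) : Prop :=
  exists w : T -> R, [/\ forall c, 0 <= w c, forall c, c \notin C -> w c = 0,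
    \sum_c w c = 1 & p = (\sum_c w c * rho c, \sum_c w c * xi c)].

(* slopes in [-oo, 0]: None stands for -oo, Some s for a real s (<= 0) *)
Definition corresponds (C : {set T}) (p : R * R) (s : option R) : Prop :=
  inconv C p /\
  match s with
  | Some s0 => forall p', inconv C p' -> p'.2 - s0 * p'.1 <= p.2 - s0 * p.1
  | None => forall p', inconv C p' -> p'.1 <= p.1
  end.

(* a point collection is P : {set T} -> R * R, relevant on the k-sets C with
   q_C > 0 *)
Definition is_point_collection (P : {set T} -> R * R) : Prop :=
  forall C : {set T}, #|C| = k -> 0 < qC C -> inconv C (P C).

Definition uS_pc (P : {set T} -> R * R) : R :=
  \sum_(C : {set T} | #|C| == k) qC C * (P C).2.

Definition uR_pc (P : {set T} -> R * R) : R :=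
  \sum_(C : {set T} | #|C| == k) qC C * (P C).1.

Definition rhoE : R :=
  seqmax (map (fun i : 'I_n => \sum_th q th * rho (th i)) (enum 'I_n)).

Definition s_pareto (s : option R) (P : {set T} -> R * R) : Prop :=
  is_point_collection P /\
  (forall C : {set T}, #|C| = k -> 0 < qC C -> corresponds C (P C) s) /\
  rhoE <= uR_pc P.

End Model.

(* Main.v *)
Require Import Defs.
From HB Require Import structures.
From mathcomp Require Import all_boot all_order all_algebra all_fingroup.
From mathcomp Require Import reals ring lra.
Import Order.TTheory GRing.Theory Num.Theory.
Local Open Scope ring_scope.
Set Implicit Arguments. Unset Strict Implicit.

Lemma amax (R : realDomainType) (I : finType) (i0 : I) (P : pred I) (F : I -> R) :
  P i0 -> P (Order.arg_max i0 P F) /\ forall j, P j -> F j <= F (Order.arg_max i0 P F).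
Proof. move=> H; case: (arg_maxP F H) => i Pi Hj; split => // j /Hj. Qed.
Lemma amin (R : realDomainType) (I : finType) (i0 : I) (P : pred I) (F : I -> R) :
  P i0 -> P (Order.arg_min i0 P F) /\ forall j, P j -> F (Order.arg_min i0 P F) <= F j.
Proof. move=> H; case: (arg_minP F H) => i Pi Hj; split => // j /Hj. Qed.

Lemma sum_ind1 (R : realType) (T : finType) (h : T) (f : T -> R) :
  \sum_c (c == h)%:R * f c = f h.
Proof.
rewrite (bigD1 h) //= eqxx mul1r big1 ?addr0 // => c /negbTE ->; by rewrite mul0r.
Qed.

Lemma sum_bound (R : realType) (T : finType) (wt : T -> R) (C : {set T}) (f : T -> R) M :
  (forall c, 0 <= wt c) -> (forall c, c \notin C -> wt c = 0) -> \sum_c wt c = 1 ->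
  (forall c, c \in C -> f c <= M) -> \sum_c wt c * f c <= M.
Proof.
move=> w0 wout w1 hf.
apply: (@le_trans _ _ (\sum_c wt c * M)).
  apply: ler_sum => c _; case: (boolP (c \in C)) => hc.
    by apply: ler_wpM2l => //; apply: hf.
  by rewrite wout // !mul0r.
by rewrite -mulr_suml w1 mul1r.
Qed.

Section PA.
Variables (R : realType) (T : finType) (k : nat) (rho xi : T -> R) (c0 : T).
Variable w : {set T} -> R.
Hypothesis w_ge0 : forall C, 0 <= w C.

Definition vl (l : R) (c : T) := xi c + l * rho c.

Lemma inconv_bound (C : {set T}) p l M : inconv rho xi C p ->
  (forall c, c \in C -> vl l c <= M) -> p.2 + l * p.1 <= M.
Proof.
case=> wt [w0 wout w1 ->] /= hf.
have -> : \sum_c wt c * xi c + l * \sum_c wt c * rho c = \sum_c wt c * vl l c.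
  rewrite mulr_sumr -big_split /=; apply: eq_bigr => c _; rewrite /vl; ring.
exact: sum_bound hf.
Qed.

Lemma inconv_bound1 (C : {set T}) p M : inconv rho xi C p ->
  (forall c, c \in C -> rho c <= M) -> p.1 <= M.
Proof. case=> wt [w0 wout w1 ->] /= hf; exact: sum_bound hf. Qed.

Definition m0 (C : {set T}) := odflt c0 [pick c in C].
Lemma m0_in (C : {set T}) : C != set0 -> m0 C \in C.
Proof.
move=> /set0Pn [x hx]; rewrite /m0; case: pickP => //= /(_ x); by rewrite hx.
Qed.

Definition mx l (C : {set T}) := Order.arg_max (m0 C) (fun c => c \in C) (vl l).
Lemma mx_spec l (C : {set T}) : C != set0 -> mx l C \in C /\ forall c, c \in C -> vl l c <= vl l (mx l C).
Proof. move=> /m0_in h; exact: (amax (vl l) h). Qed.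

Definition Ms l (C : {set T}) : pred T := fun c => (c \in C) && (vl l (mx l C) <= vl l c).
Definition hp l (C : {set T}) := Order.arg_max (mx l C) (Ms l C) rho.
Definition lp l (C : {set T}) := Order.arg_min (mx l C) (Ms l C) rho.

Lemma Ms_mx l (C : {set T}) : C != set0 -> Ms l C (mx l C).
Proof. by move=> /(mx_spec l) [h _]; rewrite /Ms h lexx. Qed.

Lemma Ms_eq l (C : {set T}) c : C != set0 -> Ms l C c -> c \in C /\ vl l c = vl l (mx l C).
Proof.
move=> hC /andP [hc hle]; split => //; apply/le_anti; rewrite hle andbT.
by case: (mx_spec l hC) => _ /(_ c hc).
Qed.

Lemma hp_spec l (C : {set T}) : C != set0 -> Ms l C (hp l C) /\ forall c, Ms l C c -> rho c <= rho (hp l C).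
Proof. move=> /(Ms_mx l) h; exact: (amax rho h). Qed.
Lemma lp_spec l (C : {set T}) : C != set0 -> Ms l C (lp l C) /\ forall c, Ms l C c -> rho (lp l C) <= rho c.
Proof. move=> /(Ms_mx l) h; exact: (amin rho h). Qed.

Definition cand (o : option (T * T)) : R :=
  match o with None => 0 | Some (c, d) =>
    if rho d < rho c then Num.max 0 ((xi d - xi c) / (rho c - rho d)) else 0 end.

Lemma cand_ge0 o : 0 <= cand o.
Proof. case: o => [[c d]|] //=; case: ifP => // _; by rewrite le_max lexx. Qed.

Lemma hi_top l (C : {set T}) c : (forall o, cand o <= l) -> C != set0 -> c \in C -> rho c <= rho (hp l C).
Proof.
move=> hl hC hc; case: (hp_spec l hC) => hMs hmax.
rewrite leNgt; apply/negP => hlt.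
have hpos : 0 < rho c - rho (hp l C) by rewrite subr_gt0.
have := hl (Some (c, hp l C)); rewrite /= hlt ge_max => /andP [_].
rewrite ler_pdivrMr // => hx.
have : Ms l C c.
  rewrite /Ms hc /=; case: (Ms_eq hC hMs) => _ <-; rewrite /vl; nra.
by move/hmax; rewrite leNgt hlt.
Qed.

Lemma step l l' (C : {set T}) : 0 <= l' -> l' < l -> (forall o, cand o < l -> cand o <= l') ->
  C != set0 -> Ms l' C (lp l C).
Proof.
move=> hl'0 hll hcand hC.
case: (lp_spec l hC) => hMs hmin.
case: (Ms_eq hC hMs) => hd hvd.
set d := lp l C in hMs hmin hd hvd *.
suff H : forall c, c \in C -> vl l' c <= vl l' d.
  by rewrite /Ms hd /=; apply: H; case: (mx_spec l' hC).
move=> c hc.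
have H : vl l c <= vl l d by rewrite hvd; case: (mx_spec l hC) => _; apply.
case: (lerP (rho d) (rho c)) => hdc.
  move: H; rewrite /vl => H; nra.
have hpos : 0 < rho d - rho c by rewrite subr_gt0.
have hx : (xi c - xi d) / (rho d - rho c) <= l.
  by rewrite ler_pdivrMr //; move: H; rewrite /vl => H; nra.
have ht : cand (Some (d, c)) <= l by rewrite /= hdc ge_max hx andbT; lra.
case: (ltrP (cand (Some (d, c))) l) => ht2.
  have := hcand _ ht2; rewrite /= hdc ge_max => /andP [_].
  rewrite ler_pdivrMr // /vl => H2; nra.
have heq : cand (Some (d, c)) = l by apply/le_anti; rewrite ht ht2.
move: heq; rewrite /= hdc => heq.
have hl0 : 0 < l by lra.
have hx2 : (xi c - xi d) / (rho d - rho c) = l.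
  move: heq; rewrite /Num.max; case: ifP => _ // h0; lra.
have : Ms l C c.
  rewrite /Ms hc /= -hvd /vl; move: hx2 => /(congr1 (fun z => z * (rho d - rho c))).
  rewrite divfK ?lt0r_neq0 // => hx3; nra.
by move/hmin; rewrite leNgt hdc.
Qed.


Lemma partA (Q : {set T} -> R * R) (rE : R) :
  (0 < k)%N ->
  (forall C : {set T}, #|C| = k -> 0 < w C -> inconv rho xi C (Q C)) ->
  rE <= \sum_(C : {set T} | #|C| == k) w C * (Q C).1 ->
  exists l (P : {set T} -> R * R), [/\ 0 <= l,
    (forall C : {set T}, #|C| = k -> inconv rho xi C (P C) /\ corresponds rho xi C (P C) (Some (- l))),
    rE <= \sum_(C : {set T} | #|C| == k) w C * (P C).1 &
    \sum_(C : {set T} | #|C| == k) w C * (Q C).2 <= \sum_(C : {set T} | #|C| == k) w C * (P C).2].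
Proof.
move=> hk hQ hr.
set r := \sum_(C : {set T} | #|C| == k) w C * (Q C).1 in hr.
have nz : forall C : {set T}, #|C| = k -> C != set0.
  by move=> C hC; rewrite -card_gt0 hC.
pose hi l := \sum_(C : {set T} | #|C| == k) w C * rho (hp l C).
pose lo l := \sum_(C : {set T} | #|C| == k) w C * rho (lp l C).
have lohi : forall l, lo l <= hi l.
  move=> l; apply: ler_sum => C /eqP /nz hC; apply: ler_wpM2l => //.
  by case: (lp_spec l hC) => _; apply; case: (hp_spec l hC).
pose oL := Order.arg_max None xpredT cand.
have [_ hL] := amax cand (P := xpredT) (i0 := None) (erefl true).
have rhi : r <= hi (cand oL).
  apply: ler_sum => C /eqP hC.
  have := w_ge0 C; rewrite le_eqVlt => /orP [/eqP <-|hw]; first by rewrite !mul0r.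
  apply: ler_wpM2l => //; apply: (inconv_bound1 (hQ C hC hw)) => c hc.
  by apply: hi_top => //; [move=> o; apply: hL | apply: nz].
pose os := Order.arg_min oL (fun o => r <= hi (cand o)) cand.
have [hs hsmin] := amin cand (P := fun o => r <= hi (cand o)) rhi.
set l := cand os in hs hsmin.
have l0 : 0 <= l by apply: cand_ge0.
have claim : l = 0 \/ lo l <= r.
  case: (lerP (lo l) r) => [|hlt]; [by right|left].
  apply/eqP; rewrite eq_le l0 andbT leNgt; apply/negP => hl.
  have [h1 h2] := amax cand (P := fun o => cand o < l) (i0 := None) hl.
  set o' := Order.arg_max None (fun o => cand o < l) cand in h1 h2.
  have hhi : hi (cand o') < r.
    rewrite ltNge; apply/negP => /hsmin; by rewrite leNgt h1.
  have : lo l <= hi (cand o').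
    apply: ler_sum => C /eqP /nz hC; apply: ler_wpM2l => //.
    case: (hp_spec (cand o') hC) => _; apply; apply: step => //; exact: cand_ge0.
  lra.
pose t := if (lo l < hi l) && (lo l <= r) then (r - lo l) / (hi l - lo l) else 1.
have t01 : 0 <= t <= 1.
  rewrite /t; case: ifP => [/andP [h1 h2]|_]; last by rewrite ler01 lexx.
  have hp0 : 0 < hi l - lo l by rewrite subr_gt0.
  apply/andP; split; first by apply: divr_ge0; lra.
  rewrite ler_pdivrMr // mul1r; lra.
pose P (C : {set T}) := (t * rho (hp l C) + (1 - t) * rho (lp l C),
                          t * xi (hp l C) + (1 - t) * xi (lp l C)).
have uR : \sum_(C : {set T} | #|C| == k) w C * (P C).1 = t * hi l + (1 - t) * lo l.
  rewrite /hi /lo !mulr_sumr -big_split /=; apply: eq_bigr => C _; ring.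
have huR : r <= t * hi l + (1 - t) * lo l /\ (l = 0 \/ t * hi l + (1 - t) * lo l = r).
  rewrite /t; case: ifP => [/andP [h1 h2]|hf].
    have hp0 : hi l - lo l != 0 by rewrite subr_eq0 gt_eqF.
    have -> : (r - lo l) / (hi l - lo l) * hi l + (1 - (r - lo l) / (hi l - lo l)) * lo l = r.
      have -> : (r - lo l) / (hi l - lo l) * hi l + (1 - (r - lo l) / (hi l - lo l)) * lo l
        = lo l + (r - lo l) / (hi l - lo l) * (hi l - lo l) by ring.
      by rewrite divfK // addrC subrK.
    by split; [rewrite lexx | right].
  rewrite mul1r subrr mul0r addr0; split => //.
  case: claim => [->|hlo]; [by left|right].
  move: hf; have := lohi l; rewrite le_eqVlt => /orP [/eqP e|->] /=; last by rewrite hlo.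
  move=> _; apply/le_anti; by rewrite hs andbT -e hlo.
have Pval : forall C : {set T}, C != set0 -> (P C).2 + l * (P C).1 = vl l (mx l C).
  move=> C hC; case: (Ms_eq hC (proj1 (hp_spec l hC))) => _ e1.
  case: (Ms_eq hC (proj1 (lp_spec l hC))) => _ e2.
  transitivity (t * vl l (hp l C) + (1 - t) * vl l (lp l C)); first by rewrite /vl /=; ring.
  rewrite e1 e2; ring.
exists l, P; split => //.
- move=> C /nz hC.
  case: (Ms_eq hC (proj1 (hp_spec l hC))) => hh _.
  case: (Ms_eq hC (proj1 (lp_spec l hC))) => hd _.
  have hin : inconv rho xi C (P C).
    exists (fun c => t * (c == hp l C)%:R + (1 - t) * (c == lp l C)%:R); split.
    + move=> c; case/andP: t01 => ta tb.
      by rewrite addr_ge0 // mulr_ge0 ?ler0n ?subr_ge0.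
    + move=> c hc; have /negbTE -> : c != hp l C by apply: contraNneq hc => ->.
      have /negbTE -> : c != lp l C by apply: contraNneq hc => ->.
      by rewrite !mulr0 addr0.
    + rewrite big_split /= -!mulr_sumr.
      have e : forall h : T, \sum_c (c == h)%:R = 1 :> R.
        by move=> h; rewrite -[RHS](sum_ind1 h (fun _ => 1)); apply: eq_bigr => c _; rewrite mulr1.
      rewrite !e; ring.
    + rewrite /P; congr pair.
        rewrite (eq_bigr (fun c => t * ((c == hp l C)%:R * rho c) + (1 - t) * ((c == lp l C)%:R * rho c))); last by move=> c _; ring.
        by rewrite big_split /= -!mulr_sumr !sum_ind1.
      rewrite (eq_bigr (fun c => t * ((c == hp l C)%:R * xi c) + (1 - t) * ((c == lp l C)%:R * xi c))); last by move=> c _; ring.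
      by rewrite big_split /= -!mulr_sumr !sum_ind1.
  split => //; split => // p' hp'.
  have := inconv_bound (l := l) (M := vl l (mx l C)) hp'.
  have -> : p'.2 - - l * p'.1 = p'.2 + l * p'.1 by ring.
  have -> : (P C).2 - - l * (P C).1 = (P C).2 + l * (P C).1 by ring.
  rewrite Pval //; apply; by case: (mx_spec l hC).
- rewrite uR; case: huR => h1 _; lra.
- have e1 : \sum_(C : {set T} | #|C| == k) w C * (P C).2 =
      \sum_(C : {set T} | #|C| == k) w C * vl l (mx l C) - l * (t * hi l + (1 - t) * lo l).
    rewrite -uR mulr_sumr -sumrB; apply: eq_bigr => C /eqP /nz hC.
    rewrite -(Pval C hC); ring.
  have e2 : \sum_(C : {set T} | #|C| == k) w C * (Q C).2 <=
      \sum_(C : {set T} | #|C| == k) w C * vl l (mx l C) - l * r.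
    rewrite /r mulr_sumr -sumrB; apply: ler_sum => C /eqP hC.
    have := w_ge0 C; rewrite le_eqVlt => /orP [/eqP <-|hw]; first by rewrite !mul0r mulr0 subrr.
    have -> : w C * vl l (mx l C) - l * (w C * (Q C).1) = w C * (vl l (mx l C) - l * (Q C).1) by ring.
    apply: ler_wpM2l; first exact: ltW.
    have := inconv_bound (l := l) (M := vl l (mx l C)) (hQ C hC hw).
    have H : (forall c, c \in C -> vl l c <= vl l (mx l C)) by case: (mx_spec l (nz C hC)).
    move=> /(_ H); lra.
  move: e2; rewrite e1; case: huR => _ [->|->] => e2; lra.
Qed.

End PA.


Lemma perm_exists n k (A : {set 'I_n}) : (#|A| <= k)%N ->
  exists pi : 'S_n, forall a, a \in A -> (pi a < k)%N.
Proof.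
move=> hA.
pose L := enum A ++ enum (~: A).
have memL : forall i, i \in L.
  by move=> i; rewrite mem_cat !mem_enum inE; case: (i \in A).
have szL : size L = n by rewrite size_cat -!cardE cardsC card_ord.
have idx : forall i, (index i L < n)%N by move=> i; rewrite -[X in (_ < X)%N]szL index_mem.
pose g i := Ordinal (idx i).
have ginj : injective g.
  move=> i j /(congr1 val) /= h; by rewrite -(nth_index i (memL i)) h nth_index.
exists (perm ginj) => a ha; rewrite permE /= /L index_cat mem_enum ha.
apply: leq_trans hA; by rewrite cardE index_mem mem_enum.
Qed.

Lemma seqmax_in (R : realDomainType) (s : seq R) : s != [::] -> seqmax s \in s.
Proof.
case: s => // x s _; rewrite /seqmax.
elim: s => [|y s IH] /=; first by rewrite mem_seq1.
rewrite /Num.max /Order.max; case: ifP => _; rewrite !inE.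
  by move: IH; rewrite inE => /orP [->|->]; rewrite ?orbT.
by rewrite eqxx orbT.
Qed.

Lemma card_firstk (T : finType) n k (th : state n T) : (k <= n)%N -> injective th ->
  #|firstk k th| = k.
Proof.
move=> hkn hinj; rewrite /firstk card_in_imset; last by move=> i j _ _; apply: hinj.
have -> : [set i : 'I_n | (i < k)%N] = [set widen_ord hkn j | j in 'I_k].
  apply/setP => i; rewrite inE; apply/idP/imsetP => [hi|[j _ ->]] //=.
  by exists (Ordinal hi) => //; apply: val_inj.
rewrite card_imset ?card_ord // => x y /(congr1 val) /= h; exact: val_inj.
Qed.

Section B.
Variables (R : realType) (T : finType) (n k : nat) (rho xi : T -> R) (q : state n T -> R).
Hypothesis q0 : forall th, 0 <= q th.
Hypothesis hsym : forall (th : state n T) (pi : 'S_n), q [ffun i => th (pi i)] = q th.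
Hypothesis hinj : forall th : state n T, 0 < q th -> injective th.
Hypothesis hkn : (k <= n)%N.
Hypothesis hn : (0 < n)%N.
Variable phi : state n T -> 'I_k -> R.
Hypothesis phi0 : forall th sg, 0 <= phi th sg.
Hypothesis phi1 : forall th, \sum_sg phi th sg = 1.

Lemma L1 sg f : sig_prob q phi sg * cond_exp q phi sg f = \sum_th q th * phi th sg * f th.
Proof.
rewrite /cond_exp; have [h|h] := eqVneq (sig_prob q phi sg) 0.
  rewrite h mul0r; symmetry; apply: big1 => th _.
  have hnn : forall i : state n T, true -> 0 <= q i * phi i sg by move=> i _; apply: mulr_ge0.
  by rewrite (psumr_eq0P hnn h) // mul0r.
by rewrite mulrC divfK.
Qed.

Lemma exA sg : exists a : 'I_n, receiver_opt rho q phi sg a &&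
  (cond_exp q phi sg (fun th => xi (th a)) == sender_sig_value rho xi q phi sg).
Proof.
pose F j := cond_exp q phi sg (fun th => rho (th j)).
have [_ hmax] := amax F (P := xpredT) (i0 := Ordinal hn) (erefl true).
set i := Order.arg_max _ _ _ in hmax.
have hi : receiver_opt rho q phi sg i by apply/forallP => j; apply: hmax.
set L := filter (receiver_opt rho q phi sg) (enum 'I_n).
have iL : i \in L by rewrite mem_filter hi mem_enum.
have : map (fun i : 'I_n => cond_exp q phi sg (fun th => xi (th i))) L != [::].
  by apply/eqP => /(congr1 size); rewrite size_map; case: L iL.
move=> /seqmax_in /mapP [a aL e]; exists a.
move: aL; rewrite mem_filter => /andP [-> _] /=.
by rewrite /sender_sig_value -/L e.
Qed.

Definition a sg := xchoose (exA sg).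

Variable pi : 'S_n.
Hypothesis hpi : forall sg, (pi (a sg) < k)%N.

Definition b sg := pi (a sg).
Definition V (f : T -> R) := \sum_sg \sum_th q th * phi th sg * f (th (a sg)).
Definition sh (th : state n T) : state n T := [ffun i => th (pi i)].

Lemma sh_inj : injective sh.
Proof.
move=> x y /ffunP h; apply/ffunP => i.
have := h (pi^-1 i)%g; by rewrite !ffunE permKV.
Qed.

Lemma Vsh f : V f = \sum_th \sum_sg q th * phi (sh th) sg * f (th (b sg)).
Proof.
rewrite /V; transitivity (\sum_sg \sum_th q th * phi (sh th) sg * f (th (b sg))); last by rewrite exchange_big.
apply: eq_bigr => sg _.
rewrite [LHS](reindex_inj sh_inj) /=; apply: eq_bigr => th _.
by rewrite /sh hsym ffunE.
Qed.

Definition G (C : {set T}) (f : T -> R) :=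
  \sum_th \sum_sg (firstk k th == C)%:R * q th * phi (sh th) sg * f (th (b sg)).
Definition wt (C : {set T}) (c : T) := G C (fun x => (x == c)%:R) / qC k q C.
Definition Q (C : {set T}) := (\sum_c wt C c * rho c, \sum_c wt C c * xi c).

Lemma G_lin C f : \sum_c G C (fun x => (x == c)%:R) * f c = G C f.
Proof.
rewrite /G.
transitivity (\sum_c \sum_th \sum_sg (firstk k th == C)%:R * q th * phi (sh th) sg
   * (th (b sg) == c)%:R * f c).
  apply: eq_bigr => c _; rewrite mulr_suml; apply: eq_bigr => th _; by rewrite mulr_suml.
rewrite exchange_big; apply: eq_bigr => th _; rewrite exchange_big; apply: eq_bigr => sg _.
rewrite (bigD1 (th (b sg))) //= eqxx mulr1 big1 ?addr0 // => c.
by rewrite eq_sym => /negbTE ->; rewrite mulr0 mul0r.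
Qed.

Lemma qC_ge0 C : 0 <= qC k q C.
Proof. by apply: sumr_ge0 => th _; apply: mulr_ge0. Qed.

Lemma qC0 C : qC k q C = 0 -> forall f, G C f = 0.
Proof.
move=> h f; rewrite /G; apply: big1 => th _; apply: big1 => sg _.
have hnn : forall i : state n T, true -> 0 <= q i * (firstk k i == C)%:R
  by move=> i _; apply: mulr_ge0.
by rewrite (mulrC _ (q th)) (psumr_eq0P hnn h) // !mul0r.
Qed.

Lemma G_ge0 C c : 0 <= G C (fun x => (x == c)%:R).
Proof.
apply: sumr_ge0 => th _; apply: sumr_ge0 => sg _.
by rewrite !mulr_ge0.
Qed.

Lemma qC_G C f : qC k q C * (\sum_c wt C c * f c) = G C f.
Proof.
have [h|h] := eqVneq (qC k q C) 0; first by rewrite h mul0r qC0.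
rewrite mulr_sumr -G_lin; apply: eq_bigr => c _.
by rewrite /wt mulrA [qC k q C * _]mulrC divfK.
Qed.

Lemma G1 C : G C (fun _ => 1) = qC k q C.
Proof.
rewrite /G /qC; apply: eq_bigr => th _.
transitivity ((firstk k th == C)%:R * q th * \sum_sg phi (sh th) sg).
  by rewrite mulr_sumr; apply: eq_bigr => sg _; rewrite mulr1.
by rewrite phi1 mulr1 mulrC.
Qed.

Lemma Q_inconv C : 0 < qC k q C -> inconv rho xi C (Q C).
Proof.
move=> hq; exists (wt C); split => //.
- by move=> c; apply: divr_ge0; [apply: G_ge0 | apply: ltW].
- move=> c hc; rewrite /wt /G; apply/eqP; rewrite mulf_eq0; apply/orP; left; apply/eqP.
  apply: big1 => th _; apply: big1 => sg _.
  have [e|ne] := eqVneq (firstk k th) C; last by rewrite !mul0r.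
  have : th (b sg) \in C.
    by rewrite -e /firstk; apply: imset_f; rewrite inE; apply: hpi.
  move=> hin; have hne : th (b sg) != c by apply/eqP => h; move: hc; rewrite -h hin.
  by rewrite (negbTE hne) mulr0.
- have := qC_G C (fun _ => 1); rewrite G1.
  under eq_bigr do rewrite mulr1.
  move=> /(congr1 (fun x => x / qC k q C)).
  by rewrite mulrC mulrA mulVf ?mul1r ?divff // ?gt_eqF.
Qed.

Lemma sumG f : \sum_(C : {set T} | #|C| == k) G C f = V f.
Proof.
rewrite Vsh /G exchange_big; apply: eq_bigr => th _.
rewrite exchange_big; apply: eq_bigr => sg _.
have := q0 th; rewrite le_eqVlt => /orP [/eqP <-|hq].
  by rewrite !mul0r; apply: big1 => C _; rewrite mulr0 !mul0r.
rewrite (bigD1 (firstk k th)) /=; last by rewrite card_firstk ?eqxx //; apply: hinj hq.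
rewrite eqxx mul1r big1 ?addr0 // => C /andP [_ hne].
by rewrite eq_sym (negbTE hne) !mul0r.
Qed.

Lemma uS_V : uS_scheme rho xi q phi = V xi.
Proof.
rewrite /uS_scheme /V; apply: eq_bigr => sg _.
have /andP [_ /eqP e] := xchooseP (exA sg).
by rewrite -e L1.
Qed.

Lemma rhoE_V : rhoE rho q <= V rho.
Proof.
rewrite /rhoE.
have : map (fun i : 'I_n => \sum_th q th * rho (th i)) (enum 'I_n) != [::].
  by rewrite -size_eq0 size_map -cardE card_ord -lt0n.
move=> /seqmax_in /mapP [j _ ->].
have -> : \sum_th q th * rho (th j) = \sum_sg \sum_th q th * phi th sg * rho (th j).
  rewrite exchange_big /=; apply: eq_bigr => th _.
  by rewrite -mulr_suml -mulr_sumr phi1 mulr1.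
rewrite /V; apply: ler_sum => sg _.
rewrite -!L1 /=; apply: ler_wpM2l.
  by apply: sumr_ge0 => th _; apply: mulr_ge0.
have /andP [/forallP ro _] := xchooseP (exA sg).
exact: ro j.
Qed.

End B.


Unset Implicit Arguments. Set Strict Implicit.

Theorem lemma3p2 (R : realType) (T : finType) (n k : nat)
  (rho xi : T -> R) (q : state n T -> R) :
  (2 <= k)%N -> (k <= n)%N ->
  is_prior q -> symmetric_instance q ->
  forall (phi : state n T -> 'I_k -> R) (rec : 'I_k -> 'I_n),
    is_scheme phi ->
    (forall sg, (rec sg < k)%N) ->
    persuasive rho q phi rec ->
    exists (s : option R) (P : {set T} -> R * R),
      [/\ (forall s0, s = Some s0 -> s0 <= 0),
          s_pareto k rho xi q s P &
          uS_scheme rho xi q phi <= uS_pc k q P].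
Proof.
move=> hk hkn [q0 q1] [hsym hinj] phi rec [phi0 phi1] _ _.
have hk0 : (0 < k)%N by apply: leq_trans hk.
have hn : (0 < n)%N by apply: leq_trans hkn.
have [c0 _] : exists c : T, true.
  case: (pickP (fun _ : state n T => true)) => [th _|h]; first by exists (th (Ordinal hn)).
  by move: q1; rewrite big_pred0 // => /eqP; rewrite eq_sym oner_eq0.
pose A := [set a rho xi q hn phi sg | sg in 'I_k].
have hA : (#|A| <= k)%N.
  by apply: leq_trans (leq_imset_card _ _) _; rewrite card_ord.
have [pi hpi] := perm_exists hA.
have hpi' : forall sg, (pi (a rho xi q hn phi sg) < k)%N.
  by move=> sg; apply: hpi; apply/imsetP; exists sg.
have hr : rhoE rho q <= \sum_(C : {set T} | #|C| == k) qC k q C * (Q rho xi q hn phi pi C).1.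
  rewrite (eq_bigr (fun C => G rho xi q hn phi pi C rho)); last by move=> C _; rewrite qC_G.
  by rewrite sumG //; apply: rhoE_V.
have hQ : forall C : {set T}, #|C| = k -> 0 < qC k q C -> inconv rho xi C (Q rho xi q hn phi pi C).
  by move=> C _ hC; apply: Q_inconv.
have [l [P [l0 hP hR hS]]] := partA c0 (qC_ge0 k q0) hk0 hQ hr.
exists (Some (- l)), P; split.
- by move=> s0 [<-]; rewrite oppr_le0.
- split; first by move=> C hC _; case: (hP C hC).
  split; last exact: hR.
  by move=> C hC _; case: (hP C hC).
- rewrite (uS_V rho xi q0 hn phi0) -(sumG rho xi q0 hsym hinj hkn hn phi pi).
  apply: le_trans hS; rewrite le_eqVlt; apply/orP; left; apply/eqP.
  by apply: eq_bigr => C _; rewrite qC_G.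
Qed.
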